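(* There is an absolute constant $C$ such that for all real $x\ge2$ and $y\ge3$, $$\pi(x+y)-\pi(x)\le\frac{2y}{\log y}+C\,\frac{y\log\log y}{(\log y)^2}.$$
   Context: $\pi(t)$ denotes the number of primes $\le t$. *)

(* Defs.v *)
From Stdlib Require Import Reals ZArith Znumtheory List.
Open Scope R_scope.

Definition prime_count_nat (n : nat) : nat :=
  length (filter (fun k => if prime_dec (Z.of_nat k) then true else false)
                 (seq 1 n)).

(* pi(t) = number of primes <= t, for real t: primes <= t are primes <= floor t.
   Int_part t = floor t; for t < 1 Z.to_nat gives 0 or a value < 1, no primes. *)
Definition prime_pi (t : R) : nat := prime_count_nat (Z.to_nat (Int_part t)).

(* Main.v *)
Require Import Defs.
From Stdlib Require Import Reals ZArith Znumtheory List.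
From HB Require Import structures.
From mathcomp Require Import all_boot all_order all_algebra.
From mathcomp Require algebra_tactics.ring algebra_tactics.lra.
From mathcomp Require Import zify.
From mathcomp Require Import Rstruct.
Set Implicit Arguments. Unset Strict Implicit. Unset Printing Implicit Defensive.
Import Order.TTheory GRing.Theory Num.Theory.

Module SieveCore.
Import mathcomp.algebra_tactics.ring mathcomp.algebra_tactics.lra.
Local Open Scope ring_scope.

Section Gen.
Variable R : realFieldType.
Variable I : finType.

Lemma prod0 (F : I -> R) : (exists i, F i = 0) -> \prod_i F i = 0.
Proof. by case=> j Fj; rewrite (bigD1 j) //= Fj mul0r. Qed.

Lemma prod_ind (P : pred I) :
  \prod_i (if P i then 1 else 0 : R) = ([forall i, P i])%:R.
Proof.
case: (boolP [forall i, P i]) => [/forallP H|/forallPn [j Hj]].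
  by rewrite big1 // => i _; rewrite H.
by rewrite prod0 //; exists j; rewrite (negbTE Hj).
Qed.

Lemma expand1 (A : {set I}) (f : I -> R) :
  \sum_(S : {set I} | S \subset A) \prod_(i in S) f i = \prod_(i in A) (1 + f i).
Proof.
rewrite big_mkcond [RHS]big_mkcond /=.
transitivity (\prod_i ((if i \in A then f i else 0) + 1)).
  rewrite bigA_distr; apply: eq_bigr => S _.
  case: (boolP (S \subset A)) => [/subsetP SA|/subsetPn [j jS jA]].
    rewrite big_mkcond; apply: eq_bigr => i _.
    by case: (boolP (i \in S)) => // /SA ->.
  by rewrite prod0 //; exists j; rewrite jS (negbTE jA).
by apply: eq_bigr => i _; case: (i \in A); rewrite ?addr0 ?add0r // addrC.
Qed.

Lemma mobius_inner (U V : {set I}) : U \subset V ->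
  \sum_(S : {set I} | (U \subset S) && (S \subset V)) \prod_(i in V :\: S) (-1 : R)
  = (U == V)%:R.
Proof.
move=> /subsetP UV.
pose F i : R := (i \in V)%:R.
pose G i : R := if i \in U then 0 else if i \in V then -1 else 1.
have E1 : \prod_i (F i + G i) = (U == V)%:R.
  transitivity (\prod_i (if (i \in V) ==> (i \in U) then 1 else 0 : R)).
    apply: eq_bigr => i _; rewrite /F /G.
    case: (boolP (i \in U)) => iU; first by rewrite (UV _ iU) addr0.
    by case: (i \in V); rewrite /= ?addrN ?add0r.
  rewrite prod_ind; congr ((nat_of_bool _) %:R); rewrite eqEsubset.
  have -> : U \subset V by apply/subsetP.
  rewrite /=; apply/idP/idP => H. - by apply/subsetP => i iV; move/forallP: H => /(_ i); rewrite iV. - by apply/forallP => i; apply/implyP => iV; move/subsetP: H; apply.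
rewrite -E1 bigA_distr big_mkcond; apply: eq_bigr => S _.
case: (boolP (U \subset S)) => [/subsetP US|/subsetPn [j jU jS]] /=.
  case: (boolP (S \subset V)) => [/subsetP SV|/subsetPn [j jS jV]] /=.
    rewrite big_mkcond; apply: eq_bigr => i _; rewrite !inE /F /G.
    case: (boolP (i \in S)) => iS /=; first by rewrite (SV _ iS).
    case: (boolP (i \in U)) => iU; first by rewrite (US _ iU) in iS.
    by [].
  by rewrite prod0 //; exists j; rewrite jS /F (negbTE jV).
by rewrite prod0 //; exists j; rewrite (negbTE jS) /G jU.
Qed.

Lemma reindex_sup (S : {set I}) (F : {set I} -> R) :
  \sum_(V : {set I} | S \subset V) F V = \sum_(Q : {set I} | Q \subset ~: S) F (S :|: Q).
Proof.
rewrite (reindex_onto (fun Q => S :|: Q) (fun V => V :\: S)).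
  apply: eq_bigl => Q; rewrite subsetUl /=.
  apply/eqP/idP => [<-|/subsetP H]; first by apply/subsetP => i; rewrite !inE => /andP[].
  apply/setP => i; rewrite !inE; case: (boolP (i \in Q)) => iQ /=; last by case: (i \in S).
  by rewrite orbT andbT; move: (H _ iQ); rewrite inE.
move=> V /subsetP SV; apply/setP => i; rewrite !inE.
by case: (boolP (i \in S)) => // /SV ->.
Qed.

Lemma split_sets (S : {set I}) (F : {set I} -> R) :
  \sum_(W : {set I}) F W =
  \sum_(T : {set I} | T \subset S) \sum_(Q : {set I} | Q \subset ~: S) F (T :|: Q).
Proof.
rewrite (partition_big (fun W => W :&: S) (fun T => T \subset S)); last first.
  by move=> W _; apply: subsetIr.
apply: eq_bigr => T /subsetP TS.
rewrite (reindex_onto (fun Q => T :|: Q) (fun W => W :\: S)).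
  apply: eq_bigl => Q /=.
  apply/andP/idP => [[_ /eqP <-]|/subsetP H].
    by apply/subsetP => i; rewrite !inE => /andP[].
  split; apply/eqP/setP => i; rewrite !inE; have := H i; have := TS i; rewrite !inE;
  by case: (i \in Q); case: (i \in S); case: (i \in T) => //= A B; first [by move: (A isT) | by move: (B isT)].
move=> W /eqP <-; apply/setP => i; rewrite !inE.
by case: (i \in W); case: (i \in S).
Qed.

End Gen.

Lemma count_mult (a N m : nat) : (0 < m)%N ->
  count (fun n => m %| n)%N (iota a.+1 N) = ((a + N) %/ m - a %/ m)%N.
Proof.
move=> m0; elim: N => [|N IH]; first by rewrite addn0 subnn.
rewrite -[N.+1]addn1 iotaD count_cat IH /= addn0 addnA addn1 divnS // -addnS.
have : (a %/ m <= (a + N) %/ m)%N by apply: leq_div2r; apply: leq_addr.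
rewrite addSn addnS; case: (m %| (a + N).+1)%N => /=; lia.
Qed.

Lemma count_bound (R : realFieldType) (a N m : nat) : (0 < m)%N ->
  `|(count (fun n => m %| n)%N (iota a.+1 N))%:R - N%:R / m%:R| <= (1 : R).
Proof.
move=> m0; rewrite count_mult //.
have le01 : (a %/ m <= (a + N) %/ m)%N by apply: leq_div2r; apply: leq_addr.
rewrite natrB //.
have e1 := divn_eq (a + N) m; have e0 := divn_eq a m.
have r1 := ltn_pmod (a + N) m0; have r0 := ltn_pmod a m0.
set q1 := ((a + N) %/ m)%N in e1 le01 *; set q0 := (a %/ m)%N in e0 le01 *.
set s1 := ((a + N) %% m)%N in e1 r1; set s0 := (a %% m)%N in e0 r0.
have eN : (N%:R : R) = (q1%:R - q0%:R) * m%:R + s1%:R - s0%:R.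
  have : ((a + N)%:R : R) = q1%:R * m%:R + s1%:R by rewrite {1}e1 natrD natrM.
  have : ((a)%:R : R) = q0%:R * m%:R + s0%:R by rewrite {1}e0 natrD natrM.
  rewrite natrD; move=> h0 h1; rewrite h0 in h1; lra.
have mpos : (0 : R) < m%:R by rewrite ltr0n.
have hs1 : (s1%:R : R) < m%:R by rewrite ltr_nat.
have hs0 : (s0%:R : R) < m%:R by rewrite ltr_nat.
have g1 : (0 : R) <= s1%:R by rewrite ler0n.
have g0 : (0 : R) <= s0%:R by rewrite ler0n.
have -> : (q1%:R - q0%:R : R) - N%:R / m%:R = (s0%:R - s1%:R) / m%:R.
  rewrite eN; have mn0 : (m%:R : R) != 0 by rewrite gt_eqF.
  by field.
rewrite normrM normfV (gtr0_norm mpos) ler_pdivrMr // mul1r.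
rewrite ler_norml; apply/andP; split; lra.
Qed.

Section Sieve.
Variable I : finType.
Variable p : I -> nat.
Hypothesis pprime : forall i, prime (p i).
Hypothesis pinj : injective p.
Implicit Types S T U V Q W : {set I}.

Definition pr (S : {set I}) : nat := (\prod_(i in S) p i)%N.

Lemma pr_gt0 S : (0 < pr S)%N.
Proof. by rewrite /pr prodn_gt0 // => i; rewrite prime_gt0. Qed.

Lemma dvd_pr S j : (p j %| pr S)%N = (j \in S).
Proof.
rewrite /pr Euclid_dvd_prod // big_orE.
apply/existsP/idP => [[i /andP[iS]]|jS]; last by exists j; rewrite jS dvdnn.
by rewrite dvdn_prime2 // => /eqP/pinj ->.
Qed.

Lemma pr_inj S T : pr S = pr T -> S = T.
Proof. by move=> E; apply/setP => j; rewrite -!dvd_pr E. Qed.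

Lemma pr_dvd S n : (pr S %| n)%N = [forall i in S, p i %| n]%N.
Proof.
apply/idP/idP.
  move=> H; apply/forall_inP => i iS; apply: dvdn_trans H.
  by rewrite dvd_pr.
move: {2}#|S| (erefl #|S|) => k; elim: k S => [|k IH] S cS H.
  by move: cS => /eqP; rewrite cards_eq0 => /eqP ->; rewrite /pr big_set0 dvd1n.
have : (0 < #|S|)%N by rewrite cS.
rewrite card_gt0 => /set0Pn [j jS].
rewrite /pr (big_setD1 j jS) /= Gauss_dvd.
  apply/andP; split; first by move/forall_inP: H; apply.
  apply: (IH (S :\ j)); first by rewrite (cardsD1 j S) jS in cS; case: cS.
  by apply/forall_inP => i; rewrite !inE => /andP[_ iS]; move/forall_inP: H; apply.
rewrite prime_coprime //; have := dvd_pr (S :\ j) j; rewrite /pr => ->.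
by rewrite !inE eqxx.
Qed.

Lemma pr_sub S T : S \subset T -> (pr S <= pr T)%N.
Proof.
move=> ST; rewrite /pr [X in (_ <= X)%N](big_setID S) /=.
have -> : T :&: S = S by apply/setIidPr.
apply: leq_pmulr; rewrite prodn_gt0 // => i; rewrite prime_gt0 //.
Qed.

Lemma prU S T : (pr (S :|: T) * pr (S :&: T) = pr S * pr T)%N.
Proof.
rewrite /pr !(big_mkcond (fun i => i \in _)) -!big_split /=.
apply: eq_bigr => i _; rewrite !inE.
by case: (i \in S); case: (i \in T); rewrite /= ?muln1 ?mul1n.
Qed.

Variable R : realFieldType.
Variable M : nat.
Hypothesis M1 : (0 < M)%N.

Definition adm (S : {set I}) := (pr S <= M)%N.
Definition w (S : {set I}) : R := \prod_(i in S) ((p i).-1%:R)^-1.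
Definition phi (S : {set I}) : R := \prod_(i in S) ((p i).-1%:R).
Definition G := \sum_(S : {set I} | adm S) w S.
Definition sg (S : {set I}) : R := \prod_(i in S) (-1).
Definition yv (V : {set I}) : R := if adm V then sg V * w V / G else 0.
Definition lam (S : {set I}) : R :=
  (pr S)%:R * \sum_(V : {set I} | S \subset V) sg (V :\: S) * yv V.

Lemma pm1_neq0 i : ((p i).-1%:R : R) != 0.
Proof. by rewrite pnatr_eq0 -lt0n -ltnS prednK ?prime_gt1 ?prime_gt0. Qed.

Lemma w_ge0 S : 0 <= w S.
Proof. by apply: prodr_ge0 => i _; rewrite invr_ge0 ler0n. Qed.

Lemma phiw S : phi S * w S = 1.
Proof. by rewrite /phi /w -big_split /= big1 // => i _; rewrite divff ?pm1_neq0. Qed.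

Lemma sg2 S : sg S ^+ 2 = 1.
Proof. by rewrite /sg prodr_const -exprM mulnC exprM expr2 mulrNN mulr1 expr1n. Qed.

Lemma adm0 : adm set0.
Proof. by rewrite /adm /pr big_set0. Qed.

Lemma G_ge1 : 1 <= G.
Proof.
rewrite /G (bigD1 set0) ?adm0 //= /w big_set0 lerDl.
by apply: sumr_ge0 => S _; apply: w_ge0.
Qed.

Lemma G_gt0 : 0 < G.
Proof. by apply: lt_le_trans G_ge1. Qed.

Lemma pr_neq0 S : ((pr S)%:R : R) != 0.
Proof. by rewrite pnatr_eq0 -lt0n pr_gt0. Qed.

Lemma adm_sub S T : S \subset T -> adm T -> adm S.
Proof. by move=> /pr_sub ST; rewrite /adm => /(leq_trans ST). Qed.

Lemma lam0 : lam set0 = 1.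
Proof.
rewrite /lam /pr big_set0 mul1r.
transitivity (\sum_(V : {set I} | adm V) w V / G); last by rewrite -mulr_suml divff // gt_eqF // G_gt0.
rewrite (big_mkcond (fun V => set0 \subset V)) (big_mkcond adm); apply: eq_bigr => V _.
rewrite sub0set setD0 /yv; case: (adm V); last by rewrite mulr0.
by rewrite !mulrA -expr2 sg2 mul1r.
Qed.

Lemma lam_supp S : ~~ adm S -> lam S = 0.
Proof.
move=> nS; rewrite /lam big1 ?mulr0 // => V SV.
rewrite /yv; case: (boolP (adm V)) => aV; last by rewrite mulr0.
by move: nS; rewrite (adm_sub SV aV).
Qed.

Lemma inv U : \sum_(S : {set I} | U \subset S) lam S / (pr S)%:R = yv U.
Proof.
under eq_bigr => S _ do rewrite /lam mulrC mulrA mulVf ?pr_neq0 // mul1r.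
rewrite (exchange_big_dep predT) //=.
transitivity (\sum_V yv V * (U == V)%:R).
  apply: eq_bigr => V _.
  case: (boolP (U \subset V)) => UV.
    by rewrite -mobius_inner // mulr_sumr; apply: eq_bigr => S _; rewrite mulrC.
  rewrite big_pred0 ?mulr0 //; last first.
    by move=> S; apply/negP => /andP[US SV]; move: UV; rewrite (subset_trans US SV).
  have /negbTE -> : U != V by apply: contraNneq UV => ->; rewrite subxx.
  by rewrite mulr0.
rewrite (bigD1 U) //= eqxx mulr1 big1 ?addr0 // => V /negbTE.
by rewrite eq_sym => ->; rewrite mulr0.
Qed.

Lemma inv' U : \sum_(S : {set I}) (U \subset S)%:R * (lam S / (pr S)%:R) = yv U.
Proof.
rewrite -inv [RHS]big_mkcond; apply: eq_bigr => S _.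
by case: (U \subset S); rewrite /= ?mul1r ?mul0r.
Qed.

Lemma quad :
  \sum_(S : {set I}) \sum_(T : {set I}) lam S * lam T / (pr (S :|: T))%:R = G^-1.
Proof.
have E S T : ((pr (S :|: T))%:R : R)^-1 =
    ((pr S)%:R)^-1 * ((pr T)%:R)^-1 * \sum_(U : {set I} | U \subset S :&: T) phi U.
  have -> : \sum_(U : {set I} | U \subset S :&: T) phi U = (pr (S :&: T))%:R.
    rewrite /phi expand1 /pr natr_prod; apply: eq_bigr => i _.
    by have h := prednK (prime_gt0 (pprime i)); rewrite -[in RHS]h -addn1 natrD addrC.
  have d_eq : ((pr (S :&: T))%:R : R) = (pr S)%:R * (pr T)%:R / (pr (S :|: T))%:R.
    apply: (mulIf (pr_neq0 (S :|: T))); rewrite mulfVK ?pr_neq0 // mulrC -!natrM.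
    by rewrite prU.
  rewrite d_eq; have h1 := pr_neq0 S; have h2 := pr_neq0 T; have h3 := pr_neq0 (S :|: T).
  by field; rewrite h1 h2 h3.
transitivity (\sum_U phi U * yv U ^+ 2).
  under eq_bigr => S _ do under eq_bigr => T _ do rewrite E.
  transitivity (\sum_(S : {set I}) \sum_(T : {set I}) \sum_(U : {set I})
     (((U \subset S)%:R * (lam S / (pr S)%:R)) * ((U \subset T)%:R * (lam T / (pr T)%:R)) * phi U)).
    apply: eq_bigr => S _; apply: eq_bigr => T _.
    rewrite big_mkcond !mulr_sumr; apply: eq_bigr => U _.
    rewrite subsetI; case: (U \subset S); case: (U \subset T); rewrite /=; ring.
  under eq_bigr => S _ do rewrite exchange_big.
  rewrite exchange_big /=; apply: eq_bigr => U _.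
  rewrite expr2 -{1}(inv' U) -(inv' U) mulr_suml mulr_sumr; apply: eq_bigr => S _.
  rewrite !mulr_sumr; apply: eq_bigr => T _; ring.
transitivity (\sum_(U : {set I} | adm U) w U / G ^+ 2).
  rewrite [RHS]big_mkcond; apply: eq_bigr => U _; rewrite /yv.
  case: (adm U); last by rewrite expr0n /= mulr0.
  have h1 := phiw U; have h2 := sg2 U; have h3 : G != 0 by rewrite gt_eqF // G_gt0.
  rewrite !exprMn h2 mul1r mulrA expr2 (mulrA (phi U)) h1 mul1r exprVn //.
rewrite -mulr_suml -/G; have h3 : G != 0 by rewrite gt_eqF // G_gt0.
by field.
Qed.


Lemma w_disj T Q : (forall i, i \in T -> i \notin Q) -> w (T :|: Q) = w T * w Q.
Proof.
move=> H; rewrite /w !(big_mkcond (fun i => i \in _)) -big_split /=.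
apply: eq_bigr => i _; rewrite !inE.
case: (boolP (i \in T)) => iT; last by rewrite mul1r.
by rewrite (negbTE (H _ iT)) mulr1.
Qed.

Lemma prw S : (pr S)%:R * w S = \sum_(T : {set I} | T \subset S) w T.
Proof.
rewrite /w expand1 /pr natr_prod -big_split /=; apply: eq_bigr => i _.
have h := pm1_neq0 i.
have -> : ((p i)%:R : R) = (p i).-1%:R + 1.
  by have h' := prednK (prime_gt0 (pprime i)); rewrite -[in LHS]h' -addn1 natrD.
by field.
Qed.

Lemma key S : (pr S)%:R * \sum_(V : {set I} | (S \subset V) && adm V) w V <= G.
Proof.
have -> : \sum_(V : {set I} | (S \subset V) && adm V) w V
   = \sum_(V : {set I} | S \subset V) (adm V)%:R * w V.
  rewrite big_mkcond [RHS]big_mkcond; apply: eq_bigr => V _.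
  by case: (S \subset V); case: (adm V); rewrite /= ?mul1r ?mul0r.
rewrite reindex_sup.
have E : forall Q : {set I}, Q \subset ~: S -> (adm (S :|: Q))%:R * w (S :|: Q) = w S * ((adm (S :|: Q))%:R * w Q).
  move=> Q /subsetP QS; rewrite w_disj; first by ring.
  by move=> i iS; apply/negP => /QS; rewrite inE iS.
rewrite (eq_bigr _ E) -mulr_sumr mulrA prw mulr_suml.
rewrite /G [X in _ <= X]big_mkcond [X in _ <= X](split_sets S) /=.
apply: ler_sum => T /subsetP TS; rewrite mulr_sumr; apply: ler_sum => Q /subsetP QS.
have disj : forall i, i \in T -> i \notin Q.
  by move=> i /TS iS; apply/negP => /QS; rewrite inE iS.
rewrite w_disj //.
case: (boolP (adm (S :|: Q))) => aSQ.
  have -> : adm (T :|: Q).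
    apply: adm_sub aSQ; apply/subsetP => i; rewrite !inE => /orP[/TS -> //|->]; by rewrite orbT.
  by rewrite mul1r.
rewrite mul0r mulr0; case: (adm (T :|: Q)) => //.
by apply: mulr_ge0; apply: w_ge0.
Qed.

Lemma norm_sg S : `|sg S| = 1.
Proof. by rewrite /sg prodr_const normrX normrN1 expr1n. Qed.

Lemma lam_bound S : `|lam S| <= 1.
Proof.
rewrite /lam normrM ger0_norm ?ler0n //.
apply: le_trans (_ : (pr S)%:R * (\sum_(V : {set I} | (S \subset V) && adm V) w V / G) <= 1).
  apply: ler_wpM2l; first by rewrite ler0n.
  apply: le_trans (ler_norm_sum _ _ _) _.
  rewrite (big_mkcond (fun V => (S \subset V) && adm V)) [X in _ <= X]big_mkcond /=.
  rewrite [X in X <= _]big_mkcond /=.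
  apply: ler_sum => V _; case: (S \subset V) => //=.
  rewrite normrM norm_sg mul1r /yv; case: (adm V); last by rewrite normr0.
  rewrite -mulrA normrM norm_sg mul1r ger0_norm //; apply: divr_ge0; [apply: w_ge0|apply: ltW; apply: G_gt0].
rewrite -mulr_suml mulrA ler_pdivrMr ?G_gt0 // mul1r; apply: key.
Qed.

Lemma natr_count (T : Type) (a : pred T) (r : seq T) :
  ((count a r)%:R : R) = \sum_(n <- r) (a n)%:R.
Proof. by elim: r => [|x r IH]; rewrite ?big_nil ?big_cons //= natrD IH. Qed.

Definition Dn (n : nat) : {set I} := [set i | p i %| n]%N.

Lemma subDn W n : (W \subset Dn n) = (pr W %| n)%N.
Proof.
rewrite pr_dvd; apply/subsetP/forall_inP => H i iW.
  by move: (H _ iW); rewrite inE.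
by rewrite inE; apply: H.
Qed.

Lemma sq_expand n :
  (\sum_(S : {set I} | S \subset Dn n) lam S) ^+ 2 =
  \sum_(S : {set I}) \sum_(T : {set I}) lam S * lam T * (pr (S :|: T) %| n)%N%:R.
Proof.
rewrite expr2 big_mkcond mulr_suml; apply: eq_bigr => S _.
rewrite big_mkcond mulr_sumr; apply: eq_bigr => T _ /=.
rewrite -subDn subUset.
by case: (S \subset Dn n); case: (T \subset Dn n); rewrite /= ?mul0r ?mulr0 ?mulr1 ?mul1r.
Qed.

Lemma sum_abs_lam : \sum_(S : {set I}) `|lam S| <= (#|[set S : {set I} | adm S]|)%:R.
Proof.
rewrite -sum1_card natr_sum [X in _ <= X]big_mkcond /=; apply: ler_sum => S _.
rewrite inE; case: (boolP (adm S)) => aS; first exact: lam_bound.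
by rewrite lam_supp // normr0.
Qed.

Theorem sieve (a N : nat) :
  (count (fun n => [forall i, ~~ (p i %| n)%N]) (iota a.+1 N))%:R
    <= N%:R / G + (#|[set S : {set I} | adm S]|)%:R ^+ 2.
Proof.
rewrite natr_count.
apply: le_trans (_ : \sum_(n <- iota a.+1 N) (\sum_(S : {set I} | S \subset Dn n) lam S) ^+ 2 <= _).
  apply: ler_sum => n _; case: (boolP [forall i, ~~ (p i %| n)%N]) => H /=; last by apply: sqr_ge0.
  have -> : Dn n = set0.
    by apply/setP => i; rewrite !inE; move/forallP: H => /(_ i) /negbTE.
  rewrite (big_pred1 set0) ?lam0 ?expr1n // => S; exact: subset0.
under eq_bigr => n _ do rewrite sq_expand.
rewrite exchange_big; under eq_bigr => S _ do rewrite exchange_big.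
have E : forall S T, \sum_(n <- iota a.+1 N) lam S * lam T * (pr (S :|: T) %| n)%N%:R
   = lam S * lam T * (N%:R / (pr (S :|: T))%:R) +
     lam S * lam T * ((count (fun n => pr (S :|: T) %| n)%N (iota a.+1 N))%:R - N%:R / (pr (S :|: T))%:R).
  by move=> S T; rewrite -mulr_sumr -natr_count; ring.
under eq_bigr => S _ do under eq_bigr => T _ do rewrite E.
under eq_bigr => S _ do rewrite big_split /=.
rewrite big_split /=; apply: lerD.
  rewrite -quad mulr_sumr le_eqVlt; apply/orP; left; apply/eqP; apply: eq_bigr => S _.
  rewrite mulr_sumr; apply: eq_bigr => T _; ring.
apply: le_trans (_ : \sum_(S : {set I}) \sum_(T : {set I}) `|lam S| * `|lam T| <= _).
  apply: ler_sum => S _; apply: ler_sum => T _.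
  apply: le_trans (ler_norm _) _; rewrite normrM normrM.
  rewrite -[X in _ <= X]mulr1; apply: ler_wpM2l; first by apply: mulr_ge0.
  by apply: count_bound; apply: pr_gt0.
have -> : \sum_(S : {set I}) \sum_(T : {set I}) `|lam S| * `|lam T| = (\sum_(S : {set I}) `|lam S|) ^+ 2.
  by rewrite expr2 mulr_suml; apply: eq_bigr => S _; rewrite mulr_sumr.
rewrite ler_pXn2r //; [exact: sum_abs_lam | by rewrite nnegrE; apply: sumr_ge0 | by rewrite nnegrE ler0n].
Qed.

Lemma card_adm : (#|[set S : {set I} | adm S]| <= M)%N.
Proof.
pose f (S : {set I}) : 'I_M.+1 := inord (pr S).
have inj : {in [set S : {set I} | adm S] &, injective f}.
  move=> S T; rewrite !inE /adm => aS aT E; apply: pr_inj.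
  by have := congr1 (@nat_of_ord _) E; rewrite /f !inordK ?ltnS.
rewrite -(card_in_imset inj).
have : f @: [set S : {set I} | adm S] \subset [set~ ord0].
  apply/subsetP => x /imsetP [S]; rewrite inE /adm => aS ->; rewrite !inE /f.
  apply/eqP => /(congr1 (@nat_of_ord _)); rewrite inordK ?ltnS //=.
  by move=> h; have := pr_gt0 S; rewrite h.
by move/subset_leq_card; rewrite cardsC1 card_ord.
Qed.

End Sieve.

Lemma geo (R : realFieldType) (q J : nat) : (1 < q)%N ->
  \sum_(j < J) ((q%:R : R)^-1)^+j.+1 <= (q.-1%:R)^-1.
Proof.
move=> q1; have qpos : (0 : R) < q%:R by rewrite ltr0n; lia.
have q1pos : (0 : R) < q.-1%:R by rewrite ltr0n; lia.
have eq : (q%:R : R) = q.-1%:R + 1.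
  by have h := @prednK q ltac:(lia); rewrite -[in LHS]h -addn1 natrD.
elim: J => [|J IH]; first by rewrite big_ord0 invr_ge0 ltW.
rewrite big_ord_recl expr1.
have -> : \sum_(i < J) (q%:R : R)^-1 ^+ (lift ord0 i).+1 = (q%:R)^-1 * \sum_(j < J) ((q%:R : R)^-1)^+j.+1.
  by rewrite mulr_sumr; apply: eq_bigr => j _; rewrite /= exprS.
apply: le_trans (_ : (q%:R : R)^-1 + (q%:R)^-1 * (q.-1%:R)^-1 <= _).
  by rewrite lerD2l ler_wpM2l // invr_ge0 ltW.
rewrite eq; have h1 : (q.-1%:R : R) != 0 by rewrite gt_eqF.
have h2 : (q.-1%:R + 1 : R) != 0 by rewrite gt_eqF // -eq.
rewrite le_eqVlt; apply/orP; left; apply/eqP; field; by rewrite h1 h2.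
Qed.

Definition Pset (M : nat) : {pred 'I_M.+1} := fun q => prime q.

Section Harm.
Variable R : realFieldType.
Variable M : nat.
Hypothesis M1 : (0 < M)%N.
Definition PT := {x : 'I_M.+1 | prime x}.
Definition pf (i : PT) : nat := val (val i).
Lemma pf_prime i : prime (pf i). Proof. exact: (valP i). Qed.
Lemma pf_inj : injective pf. Proof. by move=> i j /val_inj /val_inj. Qed.

Definition xx (i : PT) : R := ((pf i)%:R)^-1.
Definition XX (f : {ffun PT -> 'I_M.+1}) : R := \prod_i xx i ^+ f i.
Definition supp (f : {ffun PT -> 'I_M.+1}) : {set PT} := [set i | f i != ord0].

Lemma xx_ge0 i : 0 <= xx i. Proof. by rewrite invr_ge0 ler0n. Qed.

Lemma prodT (S : {set PT}) :
  \prod_(i in S) \sum_(j < M) xx i ^+ j.+1 =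
  \sum_(f : {ffun PT -> 'I_M.+1}) (supp f == S)%:R * XX f.
Proof.
rewrite big_mkcond /=.
transitivity (\prod_i \sum_(j : 'I_M.+1) (((i \in S) == (j != ord0))%:R * xx i ^+ j)).
  apply: eq_bigr => i _; rewrite big_ord_recl /=.
  case: (i \in S) => /=.
    by rewrite mul0r add0r; apply: eq_bigr => j _; rewrite mul1r /bump leq0n add1n.
  by rewrite mul1r expr0 big1 ?addr0 // => j _; rewrite mul0r.
rewrite bigA_distr_bigA; apply: eq_bigr => f _.
rewrite big_split /= /XX; congr (_ * _).
have -> : (supp f == S) = [forall i, (i \in S) == (f i != ord0)].
  apply/eqP/forallP => [<- i|H]; first by rewrite inE.
  by apply/setP => i; rewrite inE; move: (H i) => /eqP ->.
rewrite -prod_ind; apply: eq_bigr => i _; by case: (_ == _).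
Qed.

Lemma G_ge :
  \sum_(f : {ffun PT -> 'I_M.+1}) (adm pf M (supp f))%:R * XX f <= G pf R M.
Proof.
rewrite /G.
apply: le_trans (_ : \sum_(S : {set PT} | adm pf M S) \prod_(i in S) \sum_(j < M) xx i ^+ j.+1 <= _); last first.
  apply: ler_sum => S _; apply: ler_prod => i _; apply/andP; split.
    by apply: sumr_ge0 => j _; apply: exprn_ge0; apply: xx_ge0.
  by apply: geo; apply: prime_gt1; apply: pf_prime.
under [X in _ <= X]eq_bigr => S _ do rewrite prodT.
rewrite exchange_big /=; apply: ler_sum => f _.
have X0 : 0 <= XX f by apply: prodr_ge0 => i _; apply: exprn_ge0; apply: xx_ge0.
case: (boolP (adm pf M (supp f))) => af.
  rewrite (bigD1 (supp f)) //= eqxx mul1r big1 ?addr0 // => S /andP[_ /negbTE].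
  by rewrite eq_sym => ->; rewrite mul0r.
rewrite mul0r; apply: sumr_ge0 => S _; apply: mulr_ge0 => //; apply: ler0n.
Qed.

Lemma prod_logn (m : nat) : (0 < m)%N -> (m <= M)%N ->
  (\prod_(i : PT) pf i ^ logn (pf i) m)%N = m.
Proof.
move=> m0 mM.
rewrite -[RHS](partnT m0) (widen_partn _ mM).
have -> : (\prod_(i : PT) pf i ^ logn (pf i) m)%N =
          (\prod_(x : 'I_M.+1 | prime x) x ^ logn x m)%N.
  symmetry; rewrite (reindex_omap (val : PT -> 'I_M.+1) insub); last first.
    by move=> i Pi; rewrite insubT.
  by apply: eq_bigl => -[i iA] /=; rewrite insubT ?iA /= eqxx.
rewrite big_mkcond /= -(big_mkord predT (fun q => if prime q then q ^ logn q m else 1)%N).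
apply: eq_bigr => q _; case: (boolP (prime q)) => // np.
have : logn q m = 0%N.
  by apply/eqP; rewrite -leqn0 leqNgt logn_gt0 mem_primes (negbTE np).
by move=> ->.
Qed.

Definition gg (n : 'I_M) : {ffun PT -> 'I_M.+1} := [ffun i => inord (logn (pf i) n.+1)].

Lemma gg_val (n : 'I_M) i : nat_of_ord (gg n i) = logn (pf i) n.+1.
Proof.
rewrite ffunE inordK //; apply: leq_trans (ltn_logl _ (ltn0Sn n)) _.
by rewrite ltnS ltnW.
Qed.

Lemma nu_gg (n : 'I_M) : (\prod_(i : PT) pf i ^ gg n i)%N = n.+1.
Proof.
rewrite -[RHS](prod_logn (ltn0Sn n) (ltn_ord n)).
by apply: eq_bigr => i _; rewrite gg_val.
Qed.

Lemma XX_gg (n : 'I_M) : XX (gg n) = ((n.+1)%:R)^-1.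
Proof.
rewrite /XX /xx -(nu_gg n) natr_prod -prodfV; apply: eq_bigr => i _.
by rewrite exprVn natrX.
Qed.

Lemma adm_gg (n : 'I_M) : adm pf M (supp (gg n)).
Proof.
rewrite /adm; apply: leq_trans (ltn_ord n).
apply: dvdn_leq => //; rewrite (pr_dvd pf_prime pf_inj); apply/forall_inP => i.
rewrite inE => /eqP H.
have : (0 < logn (pf i) n.+1)%N.
  rewrite lt0n -gg_val; apply/eqP => h; apply: H; apply: ord_inj; by rewrite h.
by rewrite logn_gt0 mem_primes => /and3P[].
Qed.

Lemma gg_inj : injective gg.
Proof.
move=> n m E; apply: val_inj; apply/eqP; rewrite -eqSS; apply/eqP.
by rewrite -nu_gg -(nu_gg m) E.
Qed.

Lemma harm_le_G : \sum_(n < M) ((n.+1)%:R : R)^-1 <= G pf R M.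
Proof.
apply: le_trans (G_ge).
have -> : \sum_(n < M) ((n.+1)%:R : R)^-1 = \sum_(f in gg @: [set: 'I_M]) XX f.
  rewrite big_imset /=; last by move=> x y _ _; apply: gg_inj.
  by apply: eq_big => [n|n _]; rewrite ?in_setT // XX_gg.
rewrite [X in X <= _]big_mkcond /=; apply: ler_sum => f _.
case: (boolP (f \in gg @: [set: 'I_M])) => [/imsetP [n _ ->]|_].
  by rewrite adm_gg mul1r.
apply: mulr_ge0; first by apply: ler0n.
by apply: prodr_ge0 => i _; apply: exprn_ge0; apply: xx_ge0.
Qed.

End Harm.

Theorem core (R : realFieldType) (M a N : nat) : (0 < M)%N ->
  (count (fun n => [forall i : PT M, ~~ (pf i %| n)%N]) (iota a.+1 N))%:R
    <= N%:R / (\sum_(n < M) ((n.+1)%:R : R)^-1) + M%:R ^+ 2.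
Proof.
move=> M0.
have Hp := @pf_prime M; have Hi := @pf_inj M.
apply: le_trans (sieve Hp Hi R M0 a N) _.
have H1 : 1 <= \sum_(n < M) ((n.+1)%:R : R)^-1.
  case: M M0 {Hp Hi} => // M' _; rewrite big_ord_recl /= invr1 lerDl.
  by apply: sumr_ge0 => n _; rewrite invr_ge0 ler0n.
have HG := @harm_le_G R M.
apply: lerD.
  apply: ler_wpM2l; first by rewrite ler0n.
  rewrite lef_pV2 ?posrE //. all: try exact HG. all: try (apply: lt_le_trans H1; apply: ltr01). all: try (apply: lt_le_trans (le_trans H1 HG); apply: ltr01).
rewrite ler_pXn2r // ?nnegrE ?ler0n // ler_nat.
exact: card_adm.
Qed.

End SieveCore.
Import SieveCore.
From Stdlib Require Import Lra Lia.

Local Open Scope ring_scope.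
Definition harm (M : nat) : R := \sum_(n < M) ((n.+1)%:R : R)^-1.
Local Close Scope ring_scope.
Open Scope R_scope.

Lemma core_R (M a N : nat) : (0 < M)%N ->
  INR (count (fun n => [forall i : PT M, ~~ (pf i %| n)%N]) (iota a.+1 N))
    <= INR N / harm M + INR M ^ 2.
Proof.
move=> M0; have := core R a N M0; move/RleP.
by rewrite -!INRE -RpowE.
Qed.

Lemma ln_le x y : 0 < x -> x <= y -> ln x <= ln y.
Proof.
move=> x0 [xy|->]; last by apply: Rle_refl.
by apply: Rlt_le; apply: ln_increasing.
Qed.

Lemma harm_ln (M : nat) : ln (INR M + 1) <= harm M.
Proof.
elim: M => [|M IH].
  by rewrite /harm big_ord0 /= Rplus_0_l ln_1; apply: Rle_refl.
rewrite /harm big_ord_recr -/(harm M).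
have -> : (GRing.natmul (GRing.one R) M.+1) = INR M.+1 by rewrite INRE.
change (ln (INR M.+1 + 1) <= harm M + / INR M.+1).
rewrite S_INR.
set a := INR M + 1.
have a1 : 1 <= a by rewrite /a; have := pos_INR M; lra.
have e : a + 1 = a * (1 + / a) by field; lra.
rewrite e ln_mult; [|lra|have := Rinv_0_lt_compat a; lra].
apply: Rplus_le_compat => //.
have h := exp_ineq1_le (/ a).
rewrite -[X in _ <= X](ln_exp (/ a)).
apply: ln_le => //; have := Rinv_0_lt_compat a; lra.
Qed.


Definition pz (k : nat) : bool := if prime_dec (Z.of_nat k) then true else false.

Lemma seq_iota s n : List.seq s n = iota s n.
Proof. by elim: n s => [|n IH] s //=; rewrite IH. Qed.

Lemma length_filter (f : nat -> bool) l : length (List.filter f l) = count f l.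
Proof. by elim: l => [|a l IH] //=; case: (f a) => /=; rewrite IH. Qed.

Lemma pcn_split X Y : (X <= Y)%N ->
  prime_count_nat Y = (prime_count_nat X + count pz (iota X.+1 (Y - X)))%N.
Proof.
move=> XY; rewrite /prime_count_nat -{1}(subnKC XY) seq_app filter_app length_app.
rewrite !length_filter !seq_iota; congr addn; apply: eq_count => k; rewrite /pz; by case: prime_dec.
Qed.

Lemma pz_sieve M n : pz n -> (M < n)%N -> [forall i : PT M, ~~ (pf i %| n)%N].
Proof.
rewrite /pz; case: prime_dec => [Hp|//] _ Mn; apply/forallP => i; apply/negP.
case/dvdnP => k Ek.
have Hd : (Z.of_nat (pf i) | Z.of_nat n)%Z.
  by exists (Z.of_nat k); rewrite Ek Nat2Z.inj_mul.
have pi := pf_prime i; have pi1 := prime_gt1 pi.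
have piM : (pf i <= M)%N by rewrite /pf -ltnS; apply: ltn_ord.
case: (prime_divisors _ Hp _ Hd) => [h|[h|[h|h]]]; lia.
Qed.

Lemma count_le_M X L M : (count (fun n => n <= M)%N (iota X.+1 L) <= M)%N.
Proof.
suff : forall s, (count (fun n => n <= M)%N (iota s L) <= M.+1 - s)%N.
  by move=> /(_ X.+1); lia.
elim: L => [|L IH] s /=; first by lia.
have := IH s.+1; case: (leqP s M) => h /=; lia.
Qed.


Lemma count_split X L M :
  (count pz (iota X.+1 L) <= M + count (fun n => [forall i : PT M, ~~ (pf i %| n)%N]) (iota X.+1 L))%N.
Proof.
set a := (fun n => n <= M)%N; set b := (fun n => [forall i : PT M, ~~ (pf i %| n)%N]).
apply: leq_trans (_ : count (predU a b) (iota X.+1 L) <= _)%N.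
  apply: sub_count => n pn; rewrite /= /a /b.
  case: (leqP n M) => //= Mn; exact: pz_sieve.
have := count_predUI a b (iota X.+1 L); have := count_le_M X L M; rewrite -/a; lia.
Qed.

Lemma INR_Int_part (t : R) : 0 <= t -> INR (Z.to_nat (Int_part t)) = IZR (Int_part t).
Proof.
move=> t0; rewrite INR_IZR_INZ Z2Nat.id //.
have [h1 h2] := base_Int_part t.
have : Z.lt (Z.opp 1) (Int_part t) by apply: lt_IZR; rewrite opp_IZR; lra.
lia.
Qed.

Lemma diff_setup (x y : R) : 0 <= x -> 0 <= y ->
  let X := Z.to_nat (Int_part x) in let Y := Z.to_nat (Int_part (x + y)) in
  (X <= Y)%N /\ INR (Y - X) <= y + 1 /\
  INR (prime_pi (x + y)) - INR (prime_pi x) = INR (count pz (iota X.+1 (Y - X))).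
Proof.
move=> x0 y0 X Y.
have eX := INR_Int_part x0.
have eY : INR Y = IZR (Int_part (x + y)) by apply: INR_Int_part; lra.
have [hx1 hx2] := base_Int_part x; have [hy1 hy2] := base_Int_part (x + y).
have XY : (X <= Y)%N.
  apply/ssrnat.leP; apply: INR_le; rewrite eX eY.
  have : Z.lt (Int_part x) (Z.add (Int_part (x + y)) 1).
    apply: lt_IZR; rewrite plus_IZR; lra.
  move=> h; apply: IZR_le; lia.
split => //; split.
  rewrite minus_INR; [rewrite eX eY; lra | by apply/ssrnat.leP].
rewrite /prime_pi -/X -/Y (pcn_split XY) plus_INR; lra.
Qed.

Lemma diff_sieve x y M : 0 <= x -> 0 <= y -> (0 < M)%N ->
  INR (prime_pi (x + y)) - INR (prime_pi x) <= INR M + (y + 1) / harm M + INR M ^ 2.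
Proof.
move=> x0 y0 M0; have [XY [hN ->]] := diff_setup x0 y0.
set X := Z.to_nat (Int_part x); set Y := Z.to_nat (Int_part (x + y)).
have h1 := count_split X (Y - X)%N M.
have h2 := core_R X (Y - X)%N M0.
have hN' : INR (Y - X)%N <= y + 1 by exact: hN.
have hM : 1 <= INR M by apply: (le_INR 1); apply/ssrnat.leP.
have hH : 0 < harm M.
  apply: Rlt_le_trans (harm_ln M); rewrite -ln_1; apply: ln_increasing; lra.
have h3 : INR (Y - X)%N / harm M <= (y + 1) / harm M.
  apply: Rmult_le_compat_r => //; apply: Rlt_le; apply: Rinv_0_lt_compat => //.
have h4 := le_INR _ _ (ssrnat.leP h1); rewrite plus_INR in h4.
lra.
Qed.

Lemma diff_triv x y : 0 <= x -> 0 <= y ->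
  INR (prime_pi (x + y)) - INR (prime_pi x) <= y + 1.
Proof.
move=> x0 y0; have [XY [hN ->]] := diff_setup x0 y0.
apply: Rle_trans hN; apply: le_INR; apply/ssrnat.leP.
by apply: leq_trans (count_size _ _) _; rewrite size_iota.
Qed.

Lemma div_le a b c d : 0 < b -> 0 < d -> a * d <= c * b -> a / b <= c / d.
Proof.
move=> b0 d0 h.
have -> : a / b = (a * d) * / (b * d) by field; lra.
have -> : c / d = (c * b) * / (b * d) by field; lra.
apply: Rmult_le_compat_r => //; apply: Rlt_le; apply: Rinv_0_lt_compat; nra.
Qed.

Lemma e_lt_3 : exp 1 < 3.
Proof.
set a := exp (1 / 6).
have a0 : 0 < a by apply: exp_pos.
have ea : exp 1 = a ^ 6.
  rewrite /a -[a ^ 6]exp_ln; last by apply: pow_lt.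
  by rewrite ln_pow // ln_exp; congr exp; simpl; field.
have hb : 5 / 6 <= exp (- (1 / 6)) by have := exp_ineq1_le (- (1/6)); lra.
have ha : a <= 6 / 5.
  have : exp (- (1 / 6)) = / a by rewrite exp_Ropp.
  move=> e; rewrite e in hb.
  have : a * (5 / 6) <= a * / a by apply: Rmult_le_compat_l; lra.
  rewrite Rinv_r; lra.
rewrite ea; apply: Rle_lt_trans (_ : (6 / 5) ^ 6 < 3); last by simpl; lra.
by apply: pow_incr; lra.
Qed.

Lemma exp_quad t : 0 <= t -> (1 + t / 2) ^ 2 <= exp t.
Proof.
move=> t0; have -> : exp t = exp (t / 2) * exp (t / 2) by rewrite -exp_plus; congr exp; field.
have := exp_ineq1_le (t / 2); move=> h; simpl; nra.
Qed.

Lemma ln3_gt1 : 1 < ln 3.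
Proof. rewrite -[1](ln_exp 1); apply: ln_increasing; [apply: exp_pos|apply: e_lt_3]. Qed.

Theorem mainTheorem9 :
  exists C : R,
    forall x y : R, 2 <= x -> 3 <= y ->
      INR (prime_pi (x + y)) - INR (prime_pi x)
        <= 2 * y / ln y + C * (y * ln (ln y) / (ln y) ^ 2).
Proof.
have l3 := ln3_gt1.
have ll3 : 0 < ln (ln 3) by rewrite -ln_1; apply: ln_increasing; lra.
exists (2 * 64 ^ 2 / ln (ln 3) + 11).
move=> x y hx hy.
set L := ln y; set l := ln L.
have L3 : ln 3 <= L by apply: ln_le; lra.
have L0 : 0 < L by lra.
have ll : ln (ln 3) <= l by apply: ln_le; lra.
have l0 : 0 < l by lra.
have K0 : 0 <= y * l / L ^ 2.
  apply: Rmult_le_pos; [nra | apply: Rlt_le; apply: Rinv_0_lt_compat; nra].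
have T0 : 0 <= 2 * y / L by apply: Rmult_le_pos; [lra | apply: Rlt_le; apply: Rinv_0_lt_compat; lra].
have Cpos : 0 <= 2 * 64 ^ 2 / ln (ln 3).
  apply: Rmult_le_pos; [simpl; lra | apply: Rlt_le; apply: Rinv_0_lt_compat; lra].
case: (Rlt_le_dec L 64) => hL.
  apply: Rle_trans (diff_triv _ _) _; try lra.
  have E : 2 * 64 ^ 2 / ln (ln 3) * (y * l / L ^ 2) = (2 * y) * ((64 ^ 2 / L ^ 2) * (l / ln (ln 3))).
    by field; lra.
  have h1 : 1 <= 64 ^ 2 / L ^ 2.
    apply: (Rmult_le_reg_r (L ^ 2)); first nra.
    rewrite Rmult_1_l /Rdiv Rmult_assoc Rinv_l; nra.
  have h2 : 1 <= l / ln (ln 3).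
    apply: (Rmult_le_reg_r (ln (ln 3))) => //.
    rewrite Rmult_1_l /Rdiv Rmult_assoc Rinv_l; lra.
  have h3 : 1 <= (64 ^ 2 / L ^ 2) * (l / ln (ln 3)) by nra.
  have h4 : 2 * y <= 2 * 64 ^ 2 / ln (ln 3) * (y * l / L ^ 2) by rewrite E; nra.
  rewrite Rmult_plus_distr_r; lra.
have e3 := exp_le_3.
have l1 : 1 <= l by rewrite -[1](ln_exp 1); apply: ln_le; [apply: exp_pos|lra].
have lL : l <= L / 4.
  have h : L <= exp (L / 4).
    have hq := @exp_quad (L / 4) ltac:(lra); simpl in hq; nra.
  by rewrite -[L / 4]ln_exp; apply: ln_le.
have D0 : 0 < L / 2 - l by lra.
set z := exp (L / 2 - l).
have z1 : 1 <= z by have := exp_ineq1_le (L / 2 - l); rewrite -/z; lra.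
have y0 : 0 < y by lra.
have zz : z ^ 2 = y / L ^ 2.
  rewrite /= Rmult_1_r /z -exp_plus.
  have -> : L / 2 - l + (L / 2 - l) = L + (- l) + (- l) by field.
  have eL : exp L = y by rewrite /L exp_ln.
  have el : exp l = L by rewrite /l exp_ln.
  rewrite !exp_plus !exp_Ropp eL el; field; lra.
set M := Z.to_nat (Int_part z).
have eM : INR M = IZR (Int_part z) by apply: INR_Int_part; lra.
have [hz1 hz2] := base_Int_part z.
have M0 : (0 < M)%N.
  apply/ssrnat.ltP; apply: INR_lt; rewrite INR_0; lra.
have hH : L / 2 - l <= harm M.
  apply: Rle_trans (harm_ln M); rewrite -[L / 2 - l]ln_exp -/z.
  apply: ln_le; lra.
have hd := diff_sieve (x := x) (y := y) ltac:(lra) ltac:(lra) M0.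
have hq : (y + 1) / harm M <= (y + 1) / (L / 2 - l).
  apply: Rmult_le_compat_l; first lra.
  apply: Rinv_le_contravar => //.
have hM2 : INR M ^ 2 <= z ^ 2 by apply: pow_incr; split; [apply: pos_INR | lra].
set A := y / L ^ 2.
have A1 : 1 <= A by rewrite /A -zz; nra.
have zA : z <= A by rewrite /A -zz; nra.
have yL : L ^ 2 <= y.
  have : A * L ^ 2 = y by rewrite /A; field; lra.
  nra.
set lA := l * A.
have hK : y * l / L ^ 2 = lA by rewrite /lA /A; field; lra.
have F2 : (y + 1) / (L / 2 - l) <= 2 * y / L + 4 / L + 8 * lA.
  have -> : (y + 1) / (L / 2 - l) = (2 * (y + 1)) / (L - 2 * l) by field; lra.
  have -> : 2 * y / L + 4 / L + 8 * lA = (2 * y * L + 4 * L + 8 * y * l) / L ^ 2.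
    by rewrite /lA /A; field; lra.
  apply: div_le; [lra | nra |].
  have P : 0 <= (L - 4 * l) * (4 * y * l + 2 * L) by apply: Rmult_le_pos; nra.
  simpl; nra.
have F3 : 4 / L <= lA.
  rewrite -hK; apply: div_le; [lra | nra |].
  have a1 : y <= y * l by nra.
  have a2 : y * L <= y * l * L by apply: Rmult_le_compat_r; lra.
  have a3 : L ^ 2 * L <= y * L by apply: Rmult_le_compat_r; lra.
  simpl in a3 |- *; nra.
have F4 : A <= lA by rewrite /lA; nra.
rewrite hK Rmult_plus_distr_r.
have : 0 <= 2 * 64 ^ 2 / ln (ln 3) * lA by apply: Rmult_le_pos => //; rewrite -hK.
have zA2 : z ^ 2 = A by rewrite zz.
have hMz : INR M <= z by rewrite eM.
lra.
Qed.
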